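(* Let $A$ be such that $\mathfrak{g}=\mathfrak{g}(A)$ is finite dimensional and fix $i\in\{1,\dots,\theta\}$. Let $j,k\in\{1,\dots,\theta\}$, both different from $i$, with $j\neq k$. Then $[M_{\alpha_j},N_{\alpha_k}]=0$, i.e. $[x,y]=0$ for all $x\in M_{\alpha_j}$, $y\in N_{\alpha_k}$.
   Context: $\Bbbk$ algebraically closed of characteristic $p>0$; $A=(a_{ab})\in\Bbbk^{\theta\times\theta}$ with $a_{aa}\in\{0,2\}$ and $a_{ab}=0$ iff $a_{ba}=0$ ($a\ne b$). $\mathfrak{g}(A)$ is the contragredient Lie algebra generated by a Cartan subalgebra $\mathfrak{h}$ and $e_a,f_a$ subject to $[h,h']=0$, $[h,e_a]=\xi_a(h)e_a$, $[h,f_a]=-\xi_a(h)f_a$, $[e_a,f_b]=\delta_{ab}h_a$ (with $\xi_b(h_a)=a_{ab}$), modulo the largest graded ideal meeting $\mathfrak{h}$ trivially; $\mathbb{Z}^\theta$-graded with $\deg e_a=\alpha_a=-\deg f_a$. $\varDelta^A_+=\{\beta\in\mathbb{N}_0^\theta\setminus0:\mathfrak{g}_\beta\neq0\}$, root spaces one-dimensional, spanned by fixed $e_\beta$, $f_\beta\in\mathfrak{g}_{-\beta}$. For $j\ne i$, let $d_j\ge1$ be maximal with $\alpha_j+k\alpha_i\in\varDelta^A_+$ for all $0\le k<d_j$; $M_{\alpha_j}=\bigoplus_{k=0}^{d_j-1}\Bbbk e_{\alpha_j+k\alpha_i}$ and $N_{\alpha_j}=\bigoplus_{k=0}^{d_j-1}\Bbbk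 f_{\alpha_j+k\alpha_i}$. *)

(* Defs.v *)
From HB Require Import structures.
From mathcomp Require Import all_boot all_order all_algebra.
Set Implicit Arguments. Unset Strict Implicit. Unset Printing Implicit Defensive.
Import GRing.Theory.
Local Open Scope ring_scope.

(* Degrees live in Z^theta, represented as row vectors of integers. *)
Definition simple_root (th : nat) (a : 'I_th) : 'rV[int]_th := delta_mx 0 a.

Definition is_lie_bracket (K : fieldType) (L : vectType K) (br : L -> L -> L) :=
  [/\ (forall c x y z, br (c *: x + y) z = c *: br x z + br y z),
      (forall c x y z, br z (c *: x + y) = c *: br z x + br z y),
      (forall x, br x x = 0) &
      (forall x y z, br x (br y z) + br y (br z x) + br z (br x y) = 0)].

Definition graded_ideal (K : fieldType) (L : vectType K) (th : nat)
    (br : L -> L -> L) (gr : 'rV[int]_th -> {vspace L}) (I : {vspace L}) :=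
  (forall x y, y \in I -> br x y \in I) /\
  exists s : seq 'rV[int]_th, I = (\sum_(b <- s) (I :&: gr b))%VS.

(* L, with bracket br, Cartan subalgebra H, generators e_a f_a, coroots h_a,
   functionals xi_a on H and Z^theta-grading gr, is the contragredient Lie
   algebra g(A): the quotient of the Lie algebra freely generated by H, e_a, f_a
   subject to the defining relations, by the largest graded ideal meeting H
   trivially.  This is characterised by: the relations hold, L is generated by
   H, e, f, the grading is a direct sum decomposition compatible with the
   bracket and the degrees of the generators, and L has no nonzero graded
   ideal meeting H trivially. *)
Definition is_contragredient (K : fieldType) (th : nat) (A : 'M[K]_th)
    (L : vectType K) (br : L -> L -> L) (H : {vspace L})
    (e f h : 'I_th -> L) (xi : 'I_th -> L -> K)
    (gr : 'rV[int]_th -> {vspace L}) : Prop :=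
  is_lie_bracket br /\
      [/\ [/\ [/\ \dim H = (2 * th - \rank A)%N,
          (forall a, h a \in H),
          (forall a c x y, x \in H -> y \in H ->
              xi a (c *: x + y) = c * xi a x + xi a y) &
          (forall a b, xi b (h a) = A a b)],
          (forall c : 'I_th -> K, \sum_a c a *: h a = 0 -> forall a, c a = 0) &
          (forall c : 'I_th -> K,
              (forall x, x \in H -> \sum_a c a * xi a x = 0) -> forall a, c a = 0)],
      [/\ (forall x y, x \in H -> y \in H -> br x y = 0),
          (forall x a, x \in H -> br x (e a) = xi a x *: e a),
          (forall x a, x \in H -> br x (f a) = - (xi a x *: f a)) &
          (forall a b, br (e a) (f b) = if a == b then h a else 0)],
      (forall U : {vspace L}, (H <= U)%VS -> (forall a, e a \in U) ->
          (forall a, f a \in U) ->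
          (forall x y, x \in U -> y \in U -> br x y \in U) -> U = fullv),
      [/\ (forall s : seq 'rV[int]_th, uniq s -> forall v : 'rV[int]_th -> L,
              (forall b, b \in s -> v b \in gr b) ->
              \sum_(b <- s) v b = 0 -> forall b, b \in s -> v b = 0),
          (exists s : seq 'rV[int]_th, fullv = (\sum_(b <- s) gr b)%VS),
          (forall b c x y, x \in gr b -> y \in gr c -> br x y \in gr (b + c)),
          (H <= gr (0%R : 'rV[int]_th))%VS &
          (forall a, e a \in gr (simple_root a) /\ f a \in gr (- simple_root a))] &
      (forall I, graded_ideal br gr I -> (I :&: H = 0)%VS -> I = 0%VS)].

Definition pos_root (K : fieldType) (L : vectType K) (th : nat)
    (gr : 'rV[int]_th -> {vspace L}) (b : 'rV[int]_th) : Prop :=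
  b != 0 /\ (forall a, 0 <= b 0 a) /\ gr b != 0%VS.

Definition string_len (K : fieldType) (L : vectType K) (th : nat)
    (gr : 'rV[int]_th -> {vspace L}) (i j : 'I_th) (d : nat) : Prop :=
  let P := fun d' : nat => forall k, (k < d')%N ->
             pos_root gr (simple_root j + simple_root i *+ k) in
  [/\ (1 <= d)%N, P d & forall d', P d' -> (d' <= d)%N].

(* M_{alpha_j} = sum of the root spaces g_{alpha_j + k alpha_i}, k < d_j
   (each one-dimensional, spanned by e_{alpha_j + k alpha_i}). *)
Definition Mspace (K : fieldType) (L : vectType K) (th : nat)
    (gr : 'rV[int]_th -> {vspace L}) (i j : 'I_th) (d : nat) : {vspace L} :=
  (\sum_(k < d) gr (simple_root j + simple_root i *+ k)%R)%VS.

Definition Nspace (K : fieldType) (L : vectType K) (th : nat)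
    (gr : 'rV[int]_th -> {vspace L}) (i j : 'I_th) (d : nat) : {vspace L} :=
  (\sum_(k < d) gr (- (simple_root j + simple_root i *+ k))%R)%VS.

(* Main.v *)
Require Import Defs.
From HB Require Import structures.
From mathcomp Require Import all_boot all_order all_algebra.
Set Implicit Arguments. Unset Strict Implicit. Unset Printing Implicit Defensive.
Import Order.TTheory GRing.Theory Num.Theory.
Local Open Scope ring_scope.

Section Lie.
Variables (K : fieldType) (L : vectType K) (br : L -> L -> L).
Hypothesis Hb : is_lie_bracket br.

Lemma linr x : linear (br x).
Proof. by case: Hb => _ l2 _ _ c u v; rewrite l2. Qed.
Lemma linl v : linear (fun y => br y v).
Proof. by case: Hb => l1 _ _ _ c u w; rewrite l1. Qed.

Definition brl x : {linear L -> L} :=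
  HB.pack (br x) (GRing.isLinear.Build K L L *:%R (br x) (linr x)).
Definition brr v : {linear L -> L} :=
  HB.pack (fun y => br y v) (GRing.isLinear.Build K L L *:%R (fun y => br y v) (linl v)).

Lemma brr0 x : br x 0 = 0. Proof. exact: (linear0 (brl x)). Qed.
Lemma brrD x u v : br x (u + v) = br x u + br x v. Proof. exact: (linearD (brl x)). Qed.
Lemma brrN x u : br x (- u) = - br x u. Proof. exact: (linearN (brl x)). Qed.
Lemma brrB x u v : br x (u - v) = br x u - br x v. Proof. exact: (linearB (brl x)). Qed.
Lemma brrZ x c u : br x (c *: u) = c *: br x u.
Proof. by rewrite -[c *: u]addr0 linr brr0 addr0. Qed.
Lemma brr_sum x (I : Type) r (P : pred I) F :
  br x (\sum_(i <- r | P i) F i) = \sum_(i <- r | P i) br x (F i).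
Proof. exact: (linear_sum (brl x)). Qed.
Lemma brl0 x : br 0 x = 0. Proof. exact: (linear0 (brr x)). Qed.
Lemma brlD x u v : br (u + v) x = br u x + br v x. Proof. exact: (linearD (brr x)). Qed.
Lemma brlN x u : br (- u) x = - br u x. Proof. exact: (linearN (brr x)). Qed.
Lemma brlZ x c u : br (c *: u) x = c *: br u x.
Proof. by rewrite -[c *: u]addr0 (linl x c u 0) brl0 addr0. Qed.
Lemma brl_sum x (I : Type) r (P : pred I) F :
  br (\sum_(i <- r | P i) F i) x = \sum_(i <- r | P i) br (F i) x.
Proof. exact: (linear_sum (brr x)). Qed.

Lemma brxx x : br x x = 0. Proof. by case: Hb. Qed.

Lemma anti x y : br x y = - br y x.
Proof.
have := brxx (x + y); rewrite brlD !brrD !brxx add0r addr0 => /eqP.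
by rewrite addr_eq0 => /eqP.
Qed.

Lemma jac x y z : br x (br y z) = br (br x y) z + br y (br x z).
Proof.
case: Hb => _ _ _ J; have E := J x y z.
rewrite (anti (br x y) z) (anti x z) brrN.
apply/eqP; rewrite -subr_eq0 -E !opprD !opprK; apply/eqP.
by rewrite -addrA (addrC (br z _)).
Qed.

Definition adl x : 'End(L) := linfun (brl x).
Lemma adlE x v : adl x v = br x v. Proof. by rewrite /adl lfunE. Qed.
Definition adr v : 'End(L) := linfun (brr v).
Lemma adrE x v : adr v x = br x v. Proof. by rewrite /adr lfunE. Qed.


Section Gen.
Variables (th : nat) (g : 'I_th -> L).

Fixpoint W n : {vspace L} :=
  match n with
  | 0 => <<[seq g a | a <- enum 'I_th]>>%VS
  | n.+1 => (W n + \sum_(a < th) (adl (g a) @: W n))%VS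
  end.

Lemma W_mono n : (W n <= W n.+1)%VS.
Proof. exact: addvSl. Qed.

Lemma W_le m n : (m <= n)%N -> (W m <= W n)%VS.
Proof.
elim: n => [|n IH]; first by rewrite leqn0 => /eqP->; exact: subvv.
rewrite leq_eqVlt => /orP[/eqP->|]; first exact: subvv.
by move=> /IH H; apply: subv_trans H (W_mono n).
Qed.

Lemma W_stab : exists N, (W N.+1 <= W N)%VS.
Proof.
have key n : (exists2 N, (N < n)%N & (W N.+1 <= W N)%VS) \/ (n <= \dim (W n))%N.
  elim: n => [|n [[N HN HW]|IH]]; first by right.
  - by left; exists N => //; apply: ltnW.
  case: (boolP (W n.+1 <= W n)%VS) => Hs; first by left; exists n.
  right; apply: leq_ltn_trans IH _; rewrite ltnNge; apply/negP => Hd.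
  have : (W n == W n.+1) by rewrite eqEdim W_mono Hd.
  by move/eqP => E; move: Hs; rewrite -E subvv.
case: (key (dim L).+1) => [[N _ HN]|]; first by exists N.
by rewrite ltnNge (leq_trans (dimvS (subvf _))) ?dimvf.
Qed.

Lemma gen_in N a : g a \in W N.
Proof.
apply: (subvP (W_le (leq0n N))); apply: memv_span.
by apply/mapP; exists a; rewrite ?mem_enum.
Qed.

Lemma ad_in N a x : (W N.+1 <= W N)%VS -> x \in W N -> br (g a) x \in W N.
Proof.
move=> HN Hx; apply: (subvP HN); rewrite /=.
apply: (subvP (addvSr _ _)); apply: (subvP (sumv_sup a _ (subvv _))) => //.
by rewrite -adlE; apply: memv_img.
Qed.

Lemma W_ind N (U : {vspace L}) : (forall a, g a \in U) ->
  (forall a x, x \in W N -> x \in U -> br (g a) x \in U) -> (W N <= U)%VS.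
Proof.
move=> H1 H2; suff: forall n, (n <= N)%N -> (W n <= U)%VS by apply.
elim=> [_|n IH Hn] /=.
  by apply/span_subvP => y /mapP [a _ ->].
have IH' := IH (ltnW Hn).
rewrite subv_add IH' /=; apply/subv_sumP => a _.
apply/subvP => y /memv_imgP [x Hx ->]; rewrite adlE; apply: H2.
  exact: (subvP (W_le (ltnW Hn))).
exact: (subvP IH').
Qed.

End Gen.


Section Tri.
Variables (th : nat) (H : {vspace L}) (g g' hh : 'I_th -> L) (chi : 'I_th -> L -> K).
Hypotheses (hH : forall a, hh a \in H)
  (gH : forall x a, x \in H -> br x (g a) = chi a x *: g a)
  (gg' : forall a b, br (g' a) (g b) = if a == b then hh a else 0).
Variables (N : nat).
Hypothesis HN : (W g N.+1 <= W g N)%VS.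

Lemma H_stab x v : x \in H -> v \in W g N -> br x v \in W g N.
Proof.
move=> Hx Hv; rewrite -adlE memv_preim; move: v Hv; apply/subvP.
apply: W_ind => [a|a v Hv]; first by rewrite -memv_preim adlE gH // memvZ // gen_in.
rewrite -!memv_preim !adlE => Hxv.
by rewrite jac gH // brlZ memvD ?memvZ ?ad_in.
Qed.

Lemma g'_stab a v : v \in W g N -> br (g' a) v \in (W g N + H)%VS.
Proof.
move=> Hv; rewrite -adlE memv_preim; move: v Hv; apply/subvP.
apply: W_ind => [b|b v Hv].
  rewrite -memv_preim adlE gg'; case: eqP => _; last exact: mem0v.
  exact: (subvP (addvSr _ _)).
rewrite -!memv_preim !adlE => /memv_addP [n Hn [h Hh E]].
rewrite jac E gg' brrD (anti (g b) h) gH //.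
apply: memvD; last first.
  apply: (subvP (addvSl _ _)); apply: memvD; first exact: ad_in.
  by rewrite memvN memvZ // gen_in.
case: eqP => _; last by rewrite brl0 mem0v.
apply: (subvP (addvSl _ _)); exact: H_stab.
Qed.

End Tri.

End Lie.

Section Deg.
Variables (K : fieldType) (L : vectType K) (th : nat).
Variables (gr : 'rV[int]_th -> {vspace L}) (s0 : seq 'rV[int]_th).
Hypotheses (us0 : uniq s0)
  (indep : forall s : seq 'rV[int]_th, uniq s -> forall v : 'rV[int]_th -> L,
     (forall b, b \in s -> v b \in gr b) ->
     \sum_(b <- s) v b = 0 -> forall b, b \in s -> v b = 0)
  (full : fullv = (\sum_(b <- s0) gr b)%VS).

Definition SP (P : pred 'rV[int]_th) := (\sum_(b <- s0 | P b) gr b)%VS.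

Lemma decomp r : uniq r -> forall (P : pred 'rV[int]_th) z,
  z \in (\sum_(b <- r | P b) gr b)%VS ->
  exists2 v : 'rV[int]_th -> L, (forall b, v b \in gr b) & z = \sum_(b <- r | P b) v b.
Proof.
elim: r => [_ P z|c r IH /= /andP [cr ur] P z].
  rewrite big_nil memv0 => /eqP ->; exists (fun _ => 0) => [b|]; first exact: mem0v.
  by rewrite big_nil.
rewrite big_cons; case: (boolP (P c)) => Pc; last first.
  move/(IH ur P) => [v Hv ->]; exists v => //; by rewrite big_cons (negbTE Pc).
move=> /memv_addP [u Hu [w Hw ->]].
have [v Hv ->] := IH ur P w Hw.
exists (fun b => if b == c then u else v b) => [b|].
  by case: eqP => [->|].
rewrite big_cons Pc eqxx; congr (_ + _).
rewrite big_seq_cond [in RHS]big_seq_cond.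
apply: eq_bigr => b /andP [br _]; case: eqP => // E; by move: cr; rewrite -E br.
Qed.

Lemma disj_gen P d z : z \in gr d -> z \in SP P -> d \notin [seq b <- s0 | P b] -> z = 0.
Proof.
move=> Hz /(decomp us0) [v Hv E] Hd.
pose w b := if b == d then z else - v b.
have := @indep (d :: [seq b <- s0 | P b]) _ w _ _ d.
rewrite /w eqxx; apply => //.
- by rewrite /= Hd filter_uniq.
- by move=> b _; case: (b =P d) => [->|_] //; rewrite memvN.
- rewrite big_cons eqxx (eq_big_seq (fun b => - v b)); last first.
    by move=> b bi; case: eqP => // E'; move: Hd; rewrite -E' bi.
  by rewrite big_filter sumrN -E subrr.
- exact: mem_head.
Qed.

Lemma out_zero d z : d \notin s0 -> z \in gr d -> z = 0.
Proof.
move=> Hd Hz; apply: (disj_gen (P := predT) Hz).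
  by rewrite /SP -full memvf.
by rewrite filter_predT.
Qed.

Lemma disj P d z : ~~ P d -> z \in gr d -> z \in SP P -> z = 0.
Proof.
move=> Pd Hz HS; apply: (disj_gen Hz HS).
by rewrite mem_filter negb_and Pd.
Qed.

Lemma sub_S (P : pred 'rV[int]_th) d : P d -> (gr d <= SP P)%VS.
Proof.
move=> Pd; apply/subvP => z Hz; case: (boolP (d \in s0)) => Hd.
  by rewrite /SP (big_rem d) //= Pd; apply: (subvP (addvSl _ _)).
by rewrite (out_zero Hd Hz) mem0v.
Qed.

Lemma SP_mono (P Q : pred 'rV[int]_th) : (forall b, P b -> Q b) -> (SP P <= SP Q)%VS.
Proof.
move=> PQ; apply/subvP => z /(decomp us0) [v Hv ->].
by apply: memv_suml => b Pb; apply: (subvP (sub_S (PQ b Pb))).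
Qed.

Lemma S_map (P Q : pred 'rV[int]_th) (f : 'End(L)) z :
  (forall b y, P b -> y \in gr b -> f y \in SP Q) -> z \in SP P -> f z \in SP Q.
Proof.
move=> Hf /(decomp us0) [v Hv ->]; rewrite linear_sum.
by apply: memv_suml => b Pb; exact: (Hf b _ Pb (Hv b)).
Qed.

End Deg.

Definition posd th (c : 'rV[int]_th) := (c != 0) && [forall a, 0 <= c 0 a].
Definition negd th (c : 'rV[int]_th) := (c != 0) && [forall a, c 0 a <= 0].
Definition nmx th (c : 'rV[int]_th) := [|| posd c, negd c | c == 0].

Lemma sr_e th (a b : 'I_th) : simple_root a 0 b = (b == a)%:R.
Proof. by rewrite /simple_root mxE eqxx. Qed.

Lemma srN_e th (a b : 'I_th) : (- simple_root a) 0 b = - (b == a)%:R.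
Proof. by rewrite mxE sr_e. Qed.

Lemma nz_entry th (c : 'rV[int]_th) a : c 0 a != 0 -> c != 0.
Proof. by apply: contraNneq => ->; rewrite mxE. Qed.

Lemma posd_sr th (a : 'I_th) : posd (simple_root a).
Proof.
apply/andP; split; first by apply: (@nz_entry _ _ a); rewrite sr_e eqxx.
by apply/forallP => b; rewrite sr_e ler0n.
Qed.

Lemma posd_add th (a : 'I_th) c : posd c -> posd (simple_root a + c).
Proof.
move=> /andP [_ /forallP Hc]; apply/andP; split.
  apply: (@nz_entry _ _ a); rewrite mxE sr_e eqxx.
  by have := Hc a; apply: contraTneq => E; rewrite -[c 0 a](addKr 1) E addr0.
by apply/forallP => b; rewrite mxE sr_e addr_ge0 ?ler0n.
Qed.

Lemma negd_add th (a : 'I_th) c : negd c -> negd (- simple_root a + c).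
Proof.
move=> /andP [_ /forallP Hc]; apply/andP; split.
  apply: (@nz_entry _ _ a); rewrite mxE srN_e eqxx.
  by have := Hc a; apply: contraTneq => E; rewrite -[c 0 a](addKr (-1)) E addr0 opprK.
by apply/forallP => b; rewrite mxE srN_e -oppr_ge0 opprD opprK addr_ge0 ?ler0n // oppr_ge0.
Qed.

Theorem lemma4p10 (K : closedFieldType) (p : nat) (th : nat) (A : 'M[K]_th)
    (L : vectType K) (br : L -> L -> L) (H : {vspace L})
    (e f h : 'I_th -> L) (xi : 'I_th -> L -> K)
    (gr : 'rV[int]_th -> {vspace L}) (i j k : 'I_th) (dj dk : nat) :
  prime p -> p \in [pchar K] ->
  (forall a, A a a = 0 \/ A a a = 2) ->
  (forall a b, a != b -> (A a b == 0) = (A b a == 0)) ->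
  is_contragredient A br H e f h xi gr ->
  j != i -> k != i -> j != k ->
  string_len gr i j dj -> string_len gr i k dk ->
  forall x y, x \in Mspace gr i j dj -> y \in Nspace gr i k dk -> br x y = 0.
Proof.
move=> _ _ _ _ Hc ji ki jk _ _.
case: Hc => Hb [[[dimH hinH xilin xih] hindep xiindep] [HH He Hf Hef] Hgen
  [gind [s Hs] gbr gH0 gef] Hmax].
have hH1 a : - h a \in H by rewrite memvN.
have gg1 a b : br (f a) (e b) = if a == b then - h a else 0.
  by rewrite (anti Hb) Hef eq_sym; case: eqP => [->|]; rewrite ?oppr0.
have gH2 x a : x \in H -> br x (f a) = (fun a x => - xi a x) a x *: f a.
  by move=> Hx; rewrite Hf // scaleNr.
have [Ne HNe] := W_stab Hb e.
have [Nf HNf] := W_stab Hb f.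
set Np := W Hb e Ne; set Nm := W Hb f Nf.
set V := (Nm + H + Np)%VS.
have sNm : (Nm <= V)%VS by apply: subv_trans (addvSl _ _) (addvSl _ _).
have sH : (H <= V)%VS by apply: subv_trans (addvSr _ _) (addvSl _ _).
have sNp : (Np <= V)%VS by apply: addvSr.
have sNmH : (Nm + H <= V)%VS by apply: addvSl.
have sNpH : (Np + H <= V)%VS by rewrite subv_add sNp sH.
have clos x : (forall m, m \in Nm -> br x m \in V) -> (forall h0, h0 \in H -> br x h0 \in V) ->
    (forall n, n \in Np -> br x n \in V) -> forall v, v \in V -> br x v \in V.
  move=> c1 c2 c3 v /memv_addP [w /memv_addP [m Hm [h0 Hh0 ->]] [n Hn ->]].
  by rewrite !(brrD Hb); apply: memvD; [apply: memvD|]; [apply: c1|apply: c2|apply: c3].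
have cH x : x \in H -> forall v, v \in V -> br x v \in V.
  move=> Hx; apply: clos => [m Hm|h0 Hh0|n Hn].
  - by apply: (subvP sNm); apply: (H_stab gH2 HNf).
  - by rewrite HH // mem0v.
  - by apply: (subvP sNp); apply: (H_stab He HNe).
have cE a : forall v, v \in V -> br (e a) v \in V.
  apply: clos => [m Hm|h0 Hh0|n Hn].
  - by apply: (subvP sNmH); apply: (g'_stab hinH gH2 Hef HNf).
  - apply: (subvP sNp); rewrite (anti Hb) He // memvN memvZ //.
    exact: gen_in.
  - by apply: (subvP sNp); apply: ad_in.
have cF a : forall v, v \in V -> br (f a) v \in V.
  apply: clos => [m Hm|h0 Hh0|n Hn].
  - by apply: (subvP sNm); apply: ad_in.
  - apply: (subvP sNm); rewrite (anti Hb) Hf // opprK memvZ //.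
    exact: gen_in.
  - by apply: (subvP sNpH); apply: (g'_stab hH1 He gg1 HNe).
set U := (\bigcap_(l < \dim V) (adr Hb (vbasis V)`_l @^-1: V))%VS.
have memU x v : x \in U -> v \in V -> br x v \in V.
  move=> Ux Hv; rewrite (coord_vbasis Hv) (brr_sum Hb); apply: memv_suml => l _.
  rewrite (brrZ Hb) memvZ //.
  have := subvP (bigcapv_inf (P := xpredT) (Us := fun l => (adr Hb (vbasis V)`_l @^-1: V)%VS) l isT (subvv _)) x Ux.
  by rewrite -memv_preim adrE.
have Umem x : (forall v, v \in V -> br x v \in V) -> x \in U.
  move=> Hx; rewrite memvE; apply/subv_bigcapP => l _; rewrite -memvE -memv_preim adrE.
  apply: Hx; apply: vbasis_mem; apply: mem_nth; by rewrite size_tuple.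
have UF : U = fullv.
  apply: Hgen.
  - by apply/subvP => x Hx; apply: Umem; apply: cH.
  - by move=> a; apply: Umem; apply: cE.
  - by move=> a; apply: Umem; apply: cF.
  move=> x y Ux Uy; apply: Umem => v Hv.
  have -> : br (br x y) v = br x (br y v) - br y (br x v) by rewrite (jac Hb) addrK.
  by rewrite memvB ?memU.
have VF : V = fullv.
  apply: Hgen => //.
  - by move=> a; apply: (subvP sNp); apply: gen_in.
  - by move=> a; apply: (subvP sNm); apply: gen_in.
  by move=> x y Vx Vy; apply: memU => //; rewrite UF memvf.
have us0 : uniq (undup s) by apply: undup_uniq.
have full : fullv = (\sum_(b <- undup s) gr b)%VS by rewrite big_undup ?Hs //; exact: addvv.
have NpS : (Np <= SP gr (undup s) (@posd th))%VS.
  apply: W_ind => [a|a x _ Hx].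
    by apply: (subvP (sub_S us0 gind full (posd_sr a))); case: (gef a).
  rewrite -(adlE Hb); apply: (S_map us0 _ Hx) => b z Pb Hz.
  rewrite adlE; apply: (subvP (sub_S us0 gind full (posd_add a Pb))).
  by apply: gbr => //; case: (gef a).
have NmS : (Nm <= SP gr (undup s) (@negd th))%VS.
  apply: W_ind => [a|a x _ Hx].
    have Hd : negd (- simple_root a).
      apply/andP; split; first by apply: (@nz_entry _ _ a); rewrite srN_e eqxx oppr_eq0.
      by apply/forallP => b; rewrite srN_e oppr_le0 ler0n.
    by apply: (subvP (sub_S us0 gind full Hd)); case: (gef a).
  rewrite -(adlE Hb); apply: (S_map us0 _ Hx) => b z Pb Hz.
  rewrite adlE; apply: (subvP (sub_S us0 gind full (negd_add a Pb))).
  by apply: gbr => //; case: (gef a).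
set S := SP gr (undup s) (@nmx th).
have NpS' : (Np <= S)%VS.
  apply: subv_trans NpS _; apply: SP_mono => // b Pb; by rewrite /nmx Pb.
have NmS' : (Nm <= S)%VS.
  apply: subv_trans NmS _; apply: SP_mono => // b Pb; by rewrite /nmx Pb orbT.
have HS : (H <= S)%VS.
  by apply: subv_trans gH0 _; apply: sub_S => //; rewrite /nmx eqxx !orbT.
have zero_mixed b z : ~~ nmx b -> z \in gr b -> z = 0.
  move=> Pb Hz; apply: (disj us0 gind Pb Hz).
  have : z \in V by rewrite VF memvf.
  move=> /memv_addP [w /memv_addP [m Hm [h0 Hh0 ->]] [n Hn ->]].
  apply: memvD; [apply: memvD|].
  - exact: (subvP NmS').
  - exact: (subvP HS).
  - exact: (subvP NpS').
move=> x y /memv_sumP [xs Hxs ->] /memv_sumP [ys Hys ->].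
rewrite (brl_sum Hb); apply: big1 => m _; rewrite (brr_sum Hb); apply: big1 => n _.
apply: (zero_mixed _ _ _ (gbr _ _ _ _ (Hxs m isT) (Hys n isT))).
set c := (_ + _)%R.
have Ej : c 0 j = 1.
  rewrite /c !mxE !mulmxnE !mxE !eqxx (negbTE ji) (negbTE jk) /=.
  by rewrite !mul0rn !addr0.
have Ek : c 0 k = -1.
  rewrite /c !mxE !mulmxnE !mxE !eqxx (negbTE ki) eq_sym (negbTE jk) /=.
  by rewrite !mul0rn !addr0 !add0r.
rewrite /nmx /posd /negd; apply/negP => /or3P [/andP [_ /forallP /(_ k)]|/andP [_ /forallP /(_ j)]|/eqP E].
- by rewrite Ek.
- by rewrite Ej.
- by move: Ej; rewrite E mxE.
Qed.
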